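(* Let $A$ be a finite set with $N\ge 2$ elements and let $(v_{xy})$ be a Llull matrix on $A$ with CLC structure that is not identically zero. Let $\xi$ be any admissible order, let $\rho_x=\frac{1}{N-1}\sum_{y\neq x}v_{xy}$ be the mean preference scores, and let $X$ be the top dominant irreducible component of $A$. Then for all distinct $x,y\in A$: (a) if $x<_\xi y$ then $\rho_x\ge\rho_y$; (b) $\rho_x=\rho_y$ if and only if $v_{xy}=v_{yx}$; (c) if $\rho_x\ge\rho_y$ then $v_{xy}\ge v_{yx}$, and $v_{xz}\ge v_{yz}$ and $v_{zx}\le v_{zy}$ for every $z\notin\{x,y\}$; (d) $\rho_x>\rho_y$ if and only if $v_{xy}>v_{yx}$; (e) if $v_{xy}>v_{yx}$ then $x<_\xi y$; (f) $\rho_x>\rho_y$ whenever $x\in X$ and $y\notin X$.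
   Context: A Llull matrix on a finite set $A$ is an assignment to each ordered pair of distinct elements $x\neq y$ of $A$ of a number $v_{xy}\in[0,1]$ such that $v_{xy}+v_{yx}\le 1$. Turnouts: $t_{xy}=v_{xy}+v_{yx}$; margins: $m_{xy}=v_{xy}-v_{yx}$. The matrix has CLC structure if there is a total order $\xi$ on $A$ (an admissible order) such that, writing $x<_\xi y$ when $x$ precedes $y$ and $x'$ for the immediate successor of $x$ in $\xi$ (when it exists): (i) $v_{xy}\ge v_{yx}$ whenever $x<_\xi y$; (ii) $v_{xz}=\max(v_{xy},v_{yz})$ whenever $x<_\xi y<_\xi z$; (iii) $v_{zx}=\min(v_{zy},v_{yx})$ whenever $x<_\xi y<_\xi z$; (iv) $0\le t_{xz}-t_{x'z}\le m_{xx'}$ whenever $x'$ exists and $z\notin\{x,x'\}$. Indirect scores: for $x\neq y$, $\hat v_{xy}=\max$ over all paths $x=x_0,\dots,x_n=y$ of $\min_{0\le i<n} v_{x_ix_{i+1}}$. Irreducible components are the classes of the equivalence relation $x\sim y$ iff $x=y$ or ($\hat v_{xy}>0$ and $\hat v_{yx}>0$). $x$ dominates $y$ iff $\hat v_{xy}>0$ and $\hat v_{yx}=0$; this passes to components. A top dominant irreducible component is an irreducible component dominating every other one; for a non-vanishing Llull matrix with CLC structure such a component exists (and is unique). *)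

(* Defs.v *)
From HB Require Import structures.
From mathcomp Require Import all_boot all_order all_algebra.
From mathcomp Require Import boolp classical_sets reals.
Set Implicit Arguments. Unset Strict Implicit. Unset Printing Implicit Defensive.
Import Order.TTheory GRing.Theory Num.Theory.
Local Open Scope ring_scope.
Local Open Scope classical_set_scope.

Section Llull.
Variables (R : realType) (T : finType).
Implicit Types (v : T -> T -> R) (s : seq T) (x y z : T).

Definition llull v : Prop :=
  forall x y, x != y -> [/\ 0 <= v x y, v x y <= 1 & v x y + v y x <= 1].

Definition turnout v x y := v x y + v y x.
Definition margin v x y := v x y - v y x.

(* A total order on T, given as an enumeration s of all elements of T without
   repetition: x <_s y iff x occurs before y in s. *)
Definition total_order_seq s : Prop := uniq s /\ (forall x, x \in s).
Definition olt s x y : bool := (index x s < index y s)%N.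
Definition has_succ s x : bool := ((index x s).+1 < size s)%N.
Definition succ s x : T := nth x s (index x s).+1.

Definition admissible v s : Prop :=
  [/\ total_order_seq s,
      (forall x y, olt s x y -> v y x <= v x y),
      (forall x y z, olt s x y -> olt s y z -> v x z = Num.max (v x y) (v y z)),
      (forall x y z, olt s x y -> olt s y z -> v z x = Num.min (v z y) (v y x)) &
      (forall x z, has_succ s x -> z != x -> z != succ s x ->
         0 <= turnout v x z - turnout v (succ s x) z /\
         turnout v x z - turnout v (succ s x) z <= margin v x (succ s x))].

Definition CLC v : Prop := exists s, admissible v s.

Definition nonvanishing v : Prop := exists x y, x != y /\ v x y != 0.

(* A path x = x0, x1, ..., xn = y (n >= 1) is given by x and the nonempty list
   [x1; ...; xn] with last element y; its strength is the minimum of the links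
   (all links lie in [0,1] for a Llull matrix, so 1 is a neutral start value). *)
Definition path_strength v x (p : seq T) : R :=
  \big[Num.min/1]_(e <- zip (x :: p) p) v e.1 e.2.

Definition indirect v x y : R :=
  sup [set r : R | exists p : seq T,
         [/\ p != [::], last x p = y & r = path_strength v x p]].

Definition irr_equiv v x y : Prop :=
  x = y \/ (0 < indirect v x y /\ 0 < indirect v y x).

Definition irr_component v (C : {set T}) : Prop :=
  exists x, forall y, y \in C <-> irr_equiv v x y.

Definition dominates v x y : Prop := 0 < indirect v x y /\ indirect v y x = 0.

Definition comp_dominates v (C D : {set T}) : Prop :=
  exists x y, [/\ x \in C, y \in D & dominates v x y].

Definition top_dominant_component v (X : {set T}) : Prop :=
  irr_component v X /\
  forall D, irr_component v D -> D != X -> comp_dominates v X D.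

Definition rho v x : R := (#|T|.-1)%:R^-1 * \sum_(y | y != x) v x y.

End Llull.

(* Main.v *)
Require Import Defs.
From HB Require Import structures.
From mathcomp Require Import all_boot all_order all_algebra.
From mathcomp Require Import boolp classical_sets reals.
From mathcomp Require Import lra zify.
Set Implicit Arguments. Unset Strict Implicit. Unset Printing Implicit Defensive.
Import Order.TTheory GRing.Theory Num.Theory.
Local Open Scope ring_scope.
Local Open Scope classical_set_scope.

Section Reach.
Variables (R : realType) (T : finType) (v : T -> T -> R).

Definition pos_e : rel T := fun a b => (a != b) && (0 < v a b).

Lemma ps_nil x : path_strength v x [::] = 1.
Proof. by rewrite /path_strength /= big_nil. Qed.

Lemma ps_cons x a p : path_strength v x (a :: p) = Num.min (v x a) (path_strength v a p).
Proof. by rewrite /path_strength /= big_cons. Qed.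

Lemma ps_le1 x p : path_strength v x p <= 1.
Proof.
elim: p x => [|a p IH] x; first by rewrite ps_nil.
by rewrite ps_cons ge_min IH orbT.
Qed.

Lemma ps_pos_connect x p : 0 < path_strength v x p -> connect pos_e x (last x p).
Proof.
elim: p x => [|a p IH] x /=; first by rewrite connect0.
rewrite ps_cons lt_min => /andP[h1 h2].
apply: connect_trans (IH _ h2).
have [->|ne] := eqVneq x a; first exact: connect0.
by apply: connect1; rewrite /pos_e ne.
Qed.

Lemma connect_ps x p : path pos_e x p -> 0 < path_strength v x p.
Proof.
elim: p x => [|a p IH] x /=; first by rewrite ps_nil.
case/andP => /andP[_ h] hp; rewrite ps_cons lt_min h /=; exact: IH.
Qed.

Let E (x y : T) := [set r : R | exists p : seq T,
         [/\ p != [::], last x p = y & r = path_strength v x p]].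

Lemma E0 x y : E x y !=set0.
Proof. by exists (path_strength v x [:: y]); exists [:: y]. Qed.

Lemma Eub x y : has_ubound (E x y).
Proof. by exists 1 => r [p [_ _ ->]]; apply: ps_le1. Qed.

Lemma indirect_pos x y : x != y -> (0 < indirect v x y <-> connect pos_e x y).
Proof.
move=> nxy; split.
  move=> /(sup_gt (E0 x y)) [r [p [pn <- ->]]] h; exact: ps_pos_connect.
case/connectP => p pth yE; subst y.
have pn : p != [::] by apply: contra_neq nxy => ->.
apply: (lt_le_trans (connect_ps pth)).
by apply: ub_le_sup; [apply: Eub | exists p].
Qed.

Lemma connect_homo (f : T -> T) (e : rel T) :
  (forall a b, e a b -> e (f a) (f b)) -> forall a b, connect e a b -> connect e (f a) (f b).
Proof.
move=> H a b /connectP [p pth ->]; elim: p a pth => [|c p IH] a /=; first by rewrite connect0.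
case/andP=> eac pth; exact: connect_trans (connect1 (H _ _ eac)) (IH _ pth).
Qed.


Lemma swap_connect x y : x != y -> v x y = v y x ->
  (forall z, z != x -> z != y -> v x z = v y z /\ v z x = v z y) ->
  connect pos_e x y -> connect pos_e y x.
Proof.
move=> nxy txy tw.
have yx : y != x by rewrite eq_sym.
pose f w := if w == x then y else if w == y then x else w.
have ff w : f (f w) = w.
  rewrite /f; have [->|wx] := eqVneq w x; first by rewrite ?eqxx ?(negbTE yx) ?eqxx.
  have [->|wy] := eqVneq w y; first by rewrite eqxx.
  by rewrite (negbTE wx) (negbTE wy).
have key a b : a != b -> v (f a) (f b) = v a b.
  move=> ab; rewrite /f.
  have [eax|ax] := eqVneq a x.
    subst a; rewrite ?eqxx ?(negbTE yx) ?eqxx.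
    have [ebx|bx] := eqVneq b x; first by subst b; rewrite eqxx in ab.
    have [->|bny] := eqVneq b y; first by rewrite ?(negbTE yx) ?eqxx txy.
    by rewrite ?(negbTE bx) ?(negbTE bny); case: (tw b bx bny).
  have [eay|ay] := eqVneq a y.
    subst a; rewrite ?(negbTE yx) ?eqxx.
    have [->|bx] := eqVneq b x; first by rewrite ?eqxx txy.
    have [eby|bny] := eqVneq b y; first by subst b; rewrite eqxx in ab.
    by rewrite ?(negbTE bx) ?(negbTE bny); case: (tw b bx bny).
  have [->|bx] := eqVneq b x; first by case: (tw a ax ay).
  have [->|bny] := eqVneq b y; first by rewrite ?eqxx ?(negbTE yx) ?eqxx; case: (tw a ax ay).
  by rewrite ?(negbTE bx) ?(negbTE bny).
have hom a b : pos_e a b -> pos_e (f a) (f b).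
  case/andP => ab hv; rewrite /pos_e key // hv andbT.
  by apply: contra_neq ab => /(congr1 f); rewrite !ff.
move=> /(connect_homo hom); rewrite /f eqxx ?eqxx ?(negbTE yx) ?eqxx.
done.
Qed.

End Reach.

Ltac mmcase := repeat match goal with
  | |- context [Num.max ?a ?b] => case: (leP a b)
  | |- context [Num.min ?a ?b] => case: (leP a b) end.

Section Ord.
Variables (R : realType) (T : finType) (v : T -> T -> R) (s : seq T).
Hypothesis hu : uniq s.
Hypothesis hall : forall x, x \in s.
Hypothesis H1 : forall x y, olt s x y -> v y x <= v x y.
Hypothesis H2 : forall x y z, olt s x y -> olt s y z -> v x z = Num.max (v x y) (v y z).
Hypothesis H3 : forall x y z, olt s x y -> olt s y z -> v z x = Num.min (v z y) (v y x).
Hypothesis H4 : forall x z, has_succ s x -> z != x -> z != succ s x ->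
         0 <= turnout v x z - turnout v (succ s x) z /\
         turnout v x z - turnout v (succ s x) z <= margin v x (succ s x).

Local Notation ix u := (index u s).

Lemma ix_lt u : (ix u < size s)%N.
Proof. by rewrite index_mem. Qed.

Lemma ix_inj u w : ix u = ix w -> u = w.
Proof. by move=> h; rewrite -(nth_index u (hall u)) h nth_index. Qed.

Lemma nthK u i : (i < size s)%N -> ix (nth u s i) = i.
Proof. by move=> h; apply: index_uniq. Qed.

Lemma olt_cases u w : u != w -> olt s u w \/ olt s w u.
Proof.
rewrite /olt => uw; case: (ltngtP (ix u) (ix w)) => h; [left|right|] => //.
by move/ix_inj: h => h; rewrite h eqxx in uw.
Qed.

Lemma olt_neq u w : olt s u w -> u != w.
Proof. by apply: contraTneq => ->; rewrite /olt ltnn. Qed.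

Lemma succ_ix u : has_succ s u -> ix (succ s u) = (ix u).+1.
Proof. by move=> h; rewrite /succ nthK. Qed.

Lemma succ_olt u : has_succ s u -> olt s u (succ s u).
Proof. by move=> h; rewrite /olt succ_ix. Qed.

Lemma triple p : has_succ s p -> has_succ s (succ s p) ->
  let z := succ s p in let q := succ s z in
  v q z <= v p z /\ v z p <= v z q.
Proof.
move=> hp hz z q.
have pz : olt s p z by exact: succ_olt.
have zq : olt s z q by exact: succ_olt.
have pq : olt s p q by rewrite /olt (ltn_trans pz zq).
have e2 := H2 pz zq; have e3 := H3 pz zq.
have h1 := H1 pz; have h1' := H1 zq.
have qp : q != p by rewrite eq_sym olt_neq.
have qz : q != z by rewrite eq_sym olt_neq.
have [a1 a2] := H4 hp qp qz.
have [b1 b2] := H4 hz (olt_neq pz) (olt_neq pq).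
move: a1 a2 b1 b2; rewrite /turnout /margin -/z -/q e2 e3.
move: h1 h1'; mmcase => *; split; lra.
Qed.

Lemma mn1 (a b : R) : Num.min a b <= a. Proof. by rewrite ge_min lexx. Qed.
Lemma mn2 (a b : R) : Num.min a b <= b. Proof. by rewrite ge_min lexx orbT. Qed.
Lemma mx1 (a b : R) : a <= Num.max a b. Proof. by rewrite le_max lexx. Qed.
Lemma mx2 (a b : R) : b <= Num.max a b. Proof. by rewrite le_max lexx orbT. Qed.

Lemma olt_trans a b c : olt s a b -> olt s b c -> olt s a c.
Proof. rewrite /olt; exact: ltn_trans. Qed.

Lemma le_olt a b : (ix a <= ix b)%N -> a != b -> olt s a b.
Proof.
move=> h ab; rewrite /olt ltn_neqAle h andbT.
by apply: contra_neq ab; apply: ix_inj.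
Qed.

Lemma pred_ex z : (0 < ix z)%N -> exists p, [/\ has_succ s p, succ s p = z & ix p = (ix z).-1].
Proof.
move=> h; exists (nth z s (ix z).-1).
have hl : ((ix z).-1 < size s)%N by rewrite (leq_ltn_trans (leq_pred _)) ?ix_lt.
have hi : ix (nth z s (ix z).-1) = (ix z).-1 by rewrite nthK.
split => //; first by rewrite /has_succ hi prednK // ix_lt.
rewrite /succ hi prednK // (set_nth_default z) ?ix_lt //; exact: nth_index.
Qed.

Lemma mono x y z : olt s x y -> z != x -> z != y -> v y z <= v x z /\ v z x <= v z y.
Proof.
move=> xy zx zy.
have [zx'|xz] := olt_cases zx.
  have e3 := H3 zx' xy; have e2 := H2 zx' xy.
  rewrite e3 e2; split; [exact: mn2 | exact: mx1].
have [zy'|yz] := olt_cases zy.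
  (* x < z < y *)
  have [p [hp pz ip]] := pred_ex (leq_ltn_trans (leq0n _) xz).
  have hz : has_succ s z.
    by rewrite /has_succ (leq_ltn_trans zy' (ix_lt y)).
  have := triple hp; rewrite pz => /(_ hz) /= [t1 t2].
  set q := succ s z in t1 t2.
  have hx : v p z <= v x z /\ v z x <= v z p.
    have [<-|xp] := eqVneq x p; first by [].
    have xp' : olt s x p.
      apply: le_olt xp; rewrite ip -ltnS prednK //; exact: (leq_ltn_trans (leq0n _) xz).
    have pz' : olt s p z by rewrite -pz succ_olt.
    rewrite (H2 xp' pz') (H3 xp' pz'); split; [exact: mx2 | exact: mn1].
  have hy : v y z <= v q z /\ v z q <= v z y.
    have [->|qy] := eqVneq q y; first by [].
    have zq : olt s z q by exact: succ_olt.
    have qy' : olt s q y by apply: le_olt qy; rewrite /q succ_ix.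
    rewrite (H3 zq qy') (H2 zq qy'); split; [exact: mn2 | exact: mx1].
  case: hx hy => ? ? [? ?]; split; [apply: (le_trans _ (le_trans t1 _)) | apply: (le_trans _ (le_trans t2 _))]; by [].
have e2 := H2 xy yz; have e3 := H3 xy yz.
rewrite e2 e3; split; [exact: mx2 | exact: mn1].
Qed.

Lemma inner_tie x z y : olt s x z -> olt s z y -> v x y = v y x ->
  [/\ v x z = v x y, v z x = v x y, v z y = v x y & v y z = v x y].
Proof.
move=> xz zy t.
have e2 := H2 xz zy; have e3 := H3 xz zy.
have h1 := H1 xz; have h1' := H1 zy.
move: e2 e3 t; mmcase => *; split; lra.
Qed.

Lemma cons_tie x z : has_succ s x -> v x (succ s x) = v (succ s x) x ->
  z != x -> z != succ s x -> v x z = v (succ s x) z /\ v z x = v z (succ s x).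
Proof.
move=> hx t zx zx'.
have [a1 a2] := H4 hx zx zx'.
have xx' := succ_olt hx.
move: a1 a2; rewrite /turnout /margin t subrr.
have [zx1|xz] := olt_cases zx.
  have e2 := H2 zx1 xx'; have e3 := H3 zx1 xx'; have h := H1 zx1.
  move: h; rewrite e2 e3 t; mmcase => *; split; lra.
have [zx2|x'z] := olt_cases zx'.
  by move: zx2 xz; rewrite /olt succ_ix // ltnS leqNgt => /negbTE ->.
have e2 := H2 xx' x'z; have e3 := H3 xx' x'z; have h := H1 x'z.
move: h; rewrite e2 e3 t; mmcase => *; split; lra.
Qed.

Lemma gen_tie d x y : ix y = (ix x + d.+1)%N -> v x y = v y x ->
  forall z, z != x -> z != y -> v x z = v y z /\ v z x = v z y.
Proof.
elim: d x y => [|d IH] x y hd t z zx zy.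
  have hx : has_succ s x by have := ix_lt y; rewrite hd addn1.
  have ey : succ s x = y by apply: ix_inj; rewrite succ_ix // hd addn1.
  rewrite -ey in t zy *; exact: cons_tie.
have hx : has_succ s x.
  by rewrite /has_succ (leq_ltn_trans _ (ix_lt y)) // hd -addn1 leq_add2l.
set x' := succ s x.
have xx' : olt s x x' by exact: succ_olt.
have x'y : olt s x' y by rewrite /olt succ_ix // hd addnS ltnS -addn1 leq_add2l.
have [i1 i2 i3 i4] := inner_tie xx' x'y t.
have [xz|zx'] := boolP (olt s x z && olt s z y).
  case/andP: xz => xz zy'; have [j1 j2 j3 j4] := inner_tie xz zy' t.
  by rewrite j1 j2 j3 j4 t.
have zx1 : z != x'.
  apply: contraNneq zx' => ->; by rewrite xx' x'y.
have [c1 c2] := cons_tie hx (etrans i1 (esym i2)) zx zx1.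
have t' : v x' y = v y x' by rewrite i3 i4.
have hd' : ix y = (ix x' + d.+1)%N by rewrite succ_ix // hd; lia.
have [d1 d2] := IH x' y hd' t' z zx1 zy.
by rewrite c1 c2.
Qed.

Lemma tie x y : olt s x y -> v x y = v y x ->
  forall z, z != x -> z != y -> v x z = v y z /\ v z x = v z y.
Proof.
move=> xy; apply: (@gen_tie (ix y - ix x).-1); move: xy; rewrite /olt; lia.
Qed.

Definition S u := \sum_(w | w != u) v u w.

Lemma S_split x y : x != y -> S x = v x y + \sum_(w | (w != x) && (w != y)) v x w.
Proof. by move=> xy; rewrite /S (bigD1 y) // eq_sym. Qed.

Lemma S_diff x y : x != y ->
  S x - S y = (v x y - v y x) + \sum_(w | (w != x) && (w != y)) (v x w - v y w).
Proof.
move=> xy; have yx : y != x by rewrite eq_sym.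
rewrite (S_split xy) (S_split yx).
have -> : \sum_(w | (w != y) && (w != x)) v y w = \sum_(w | (w != x) && (w != y)) v y w.
  by apply: eq_bigl => w; rewrite andbC.
rewrite sumrB; lra.
Qed.

Lemma S_le x y : olt s x y -> S y <= S x.
Proof.
move=> xy; rewrite -subr_ge0 (S_diff (olt_neq xy)) addr_ge0 //.
  by rewrite subr_ge0 H1.
apply: sumr_ge0 => w /andP[wx wy]; rewrite subr_ge0.
by case: (mono xy wx wy).
Qed.

Lemma S_eq x y : olt s x y -> S x = S y -> v x y = v y x.
Proof.
move=> xy e; have := S_diff (olt_neq xy); rewrite e subrr.
have : 0 <= \sum_(w | (w != x) && (w != y)) (v x w - v y w).
  apply: sumr_ge0 => w /andP[wx wy]; rewrite subr_ge0.
  by case: (mono xy wx wy).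
have := H1 xy; lra.
Qed.

Lemma S_tie x y : olt s x y -> v x y = v y x -> S x = S y.
Proof.
move=> xy t; apply/eqP; rewrite -subr_eq0 (S_diff (olt_neq xy)) t subrr add0r.
rewrite big1 // => w /andP[wx wy]; case: (tie xy t wx wy) => -> _; exact: subrr.
Qed.

Lemma partc a b : a != b -> S b <= S a ->
  v b a <= v a b /\ forall z, z != a -> z != b -> v b z <= v a z /\ v z a <= v z b.
Proof.
move=> ab le; have [ab'|ba] := olt_cases ab.
  by split; [exact: H1 | move=> z; exact: mono].
have e : S b = S a by apply/eqP; rewrite eq_le le S_le.
have t := S_eq ba e.
split; first by rewrite t.
move=> z za zb; have [-> ->] := tie ba t zb za; by split.
Qed.

Lemma partb a b : a != b -> (S a = S b <-> v a b = v b a).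
Proof.
move=> ab; have [ab'|ba] := olt_cases ab.
  split; [exact: S_eq | exact: S_tie].
split => h; first by rewrite (S_eq ba (esym h)).
by rewrite (S_tie ba (esym h)).
Qed.

Lemma partd a b : a != b -> (S b < S a <-> v b a < v a b).
Proof.
move=> ab; have ba : b != a by rewrite eq_sym.
split => h.
  have [h1 _] := partc ab (ltW h).
  rewrite lt_neqAle h1 andbT; apply/eqP => e.
  by move: h; rewrite ((partb ab).2 (esym e)) ltxx.
rewrite ltNge; apply/negP => le.
have [h1 _] := partc ba le; move: h; rewrite ltNge h1.
done.
Qed.

Lemma parte a b : a != b -> v b a < v a b -> olt s a b.
Proof.
move=> ab h; have [//|ba] := olt_cases ab.
by move: h; rewrite ltNge H1.
Qed.

End Ord.

Lemma ie_conn (R : realType) (T : finType) (v : T -> T -> R) u w :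
  irr_equiv v u w -> connect (pos_e v) u w /\ connect (pos_e v) w u.
Proof.
case=> [->|[h1 h2]]; first by rewrite connect0.
have [->|uw] := eqVneq u w; first by rewrite connect0.
split; first by apply/indirect_pos.
by apply/indirect_pos => //; rewrite eq_sym.
Qed.

Theorem lemma3p4 (R : realType) (T : finType) (v : T -> T -> R)
    (s : seq T) (X : {set T}) :
  (2 <= #|T|)%N ->
  llull v -> CLC v -> nonvanishing v ->
  admissible v s ->
  top_dominant_component v X ->
  forall x y, x != y ->
  (olt s x y -> rho v y <= rho v x) /\
      (rho v x = rho v y <-> v x y = v y x) /\
      (rho v y <= rho v x ->
         v y x <= v x y /\
         forall z, z != x -> z != y -> v y z <= v x z /\ v z x <= v z y) /\
      (rho v y < rho v x <-> v y x < v x y) /\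
      (v y x < v x y -> olt s x y) /\
      (x \in X -> y \notin X -> rho v y < rho v x).
Proof.
move=> hT hl _ _ [[hu hall] H1 H2 H3 H4] [[x0 hX] hdom] x y xy.
have yx : y != x by rewrite eq_sym.
set c := ((#|T|.-1)%:R^-1 : R).
have c0 : 0 < c by rewrite invr_gt0 ltr0n; lia.
have rhoE u : rho v u = c * S v u by [].
have rle a b : rho v b <= rho v a <-> S v b <= S v a.
  by rewrite !rhoE ler_pM2l.
have rlt a b : rho v b < rho v a <-> S v b < S v a.
  by rewrite !rhoE ltr_pM2l.
have req a b : rho v a = rho v b <-> S v a = S v b.
  rewrite !rhoE; split => [h|->] //; apply: (mulfI _ h); by rewrite gt_eqF.
split; first by move=> h; apply/rle; exact: (S_le hu hall H1 H2 H3 H4).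
split; first by rewrite req; exact: (partb hu hall H1 H2 H3 H4).
split; first by move/rle; exact: (partc hu hall H1 H2 H3 H4).
split; first by rewrite rlt; exact: (partd hu hall H1 H2 H3 H4).
split; first exact: (parte hall H1).
move=> xX ynX; apply/rlt; rewrite ltNge; apply/negP => le.
pose D : {set T} := finset (fun w => `[< irr_equiv v y w >]).
have yD : y \in D by rewrite inE; apply/asboolP; left.
have irrD : irr_component v D.
  by exists y => w; rewrite inE; split => /asboolP.
have DX : D != X by apply/eqP => DX; rewrite DX in yD; rewrite yD in ynX.
have [a [b [aX bD [dab dba]]]] := hdom D irrD DX.
have ab : a != b by apply/eqP => eab; subst a; rewrite dba ltxx in dab.
have cab : connect (pos_e v) a b by apply/indirect_pos.
have ba : b != a by rewrite eq_sym.
have ncba : ~ connect (pos_e v) b a.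
  by move=> /(indirect_pos _ ba); rewrite dba ltxx.
have [cx0a _] := ie_conn (proj1 (hX a) aX).
have [_ cxx0] := ie_conn (proj1 (hX x) xX).
have [cyb cby] : connect (pos_e v) y b /\ connect (pos_e v) b y.
  by apply: ie_conn; move: bD; rewrite inE => /asboolP.
have cxy : connect (pos_e v) x y.
  apply: (connect_trans cxx0); apply: (connect_trans cx0a).
  exact: (connect_trans cab).
suff cyx : connect (pos_e v) y x.
  apply: ncba; apply: (connect_trans cby); apply: (connect_trans cyx).
  exact: (connect_trans cxx0).
have [h1 h2] := partc hu hall H1 H2 H3 H4 yx le.
have [lt|gt|eq] := ltgtP (S v x) (S v y).
- have := (partd hu hall H1 H2 H3 H4 yx).1 lt.
  have [v0 _ _] := hl x y xy.
  move=> hv; apply: connect1; rewrite /pos_e yx /=; exact: le_lt_trans hv.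
- by move: le; rewrite leNgt gt.
- have [t _] := (partb hu hall H1 H2 H3 H4 xy).
  have le2 : S v y <= S v x by rewrite eq.
  have tw : forall z, z != x -> z != y -> v x z = v y z /\ v z x = v z y.
    move=> z zx zy; have [k1 k2] := h2 z zy zx.
    have [_ h2'] := partc hu hall H1 H2 H3 H4 xy le2.
    have [k3 k4] := h2' z zx zy.
    by split; apply/eqP; rewrite eq_le ?k1 ?k2 ?k3 ?k4.
  exact: swap_connect xy (t eq) tw cxy.
Qed.
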